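(* Let $\Sigma$ be a finite alphabet, $z_1,\dots,z_n\in\Sigma$, and $L_z=\Sigma^*z_1\Sigma^*z_2\Sigma^*\cdots\Sigma^*z_n\Sigma^*$. There exists an end-decisive MM-QFA that accepts $L_z$ with bounded positive one-sided error.
   Context: A measure-many quantum finite automaton (MM-QFA) over $\Sigma$ is a tuple $(Q,\Sigma,\{U_\sigma\}_{\sigma\in\Sigma\cup\{\$\}},q_0,Q_{acc},Q_{rej})$ with $Q$ finite indexing an orthonormal basis of $\mathbb{C}^Q$, end-marker $\$\notin\Sigma$, unitary $U_\sigma$, initial state $q_0$, and $Q$ partitioned into $Q_{acc},Q_{rej},Q_{non}$ with orthogonal projections $P_{acc},P_{rej},P_{non}$ onto the corresponding spans. On input $x\in\Sigma^*$ it processes the symbols of $x\$$ maintaining $(\psi,p_{acc},p_{rej})$, initially $(|q_0\rangle,0,0)$; on reading $\sigma$: $\psi'=U_\sigma\psi$, $p_{acc}\mathrel{+}=\|P_{acc}\psi'\|^2$, $p_{rej}\mathrel{+}=\|P_{rej}\psi'\|^2$, $\psi\leftarrow P_{non}\psi'$; the acceptance probability $p_M(x)$ is the final $p_{acc}$. The MM-QFA is end-decisive if, for every input, $P_{acc}\psi'=0$ after reading every symbol other than the end-marker (i.e. it can be observed in an accepting state only when $\$$ is read). It accepts $L$ with bounded positive one-sided error if there is $c>0$ with $p_M(x)>c$ for all $x\in L$ and $p_M(x)=0$ for all $x\notin L$. *)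

(* Defs.v *)
From mathcomp Require Import all_boot all_algebra.
From mathcomp Require Import reals.
From mathcomp.real_closed Require Export complex.
Set Implicit Arguments. Unset Strict Implicit. Unset Printing Implicit Defensive.
Import GRing.Theory Num.Theory.
Local Open Scope ring_scope.

(* States are 'I_nQ (indexing the orthonormal basis of C^nQ); the input
   symbols are [Some s] for s : Sigma and the end-marker $ is [None]. *)
Record mmqfa (C : numClosedFieldType) (Sigma : finType) := MMQFA {
  nQ : nat;
  U : option Sigma -> 'M[C]_nQ;
  q0 : 'I_nQ;
  Qacc : {set 'I_nQ};
  Qrej : {set 'I_nQ}
}.

Section MMQFA.
Variables (C : numClosedFieldType) (Sigma : finType).

Definition adjmx n (A : 'M[C]_n) : 'M[C]_n := (map_mx Num.conj A)^T.
Definition unitarymx n (A : 'M[C]_n) : Prop := A *m adjmx A = 1%:M.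

Definition projS n (S : {set 'I_n}) (v : 'cV[C]_n) : 'cV[C]_n :=
  \col_i (if i \in S then v i 0 else 0).
Definition sqnorm n (v : 'cV[C]_n) : C := \sum_i `|v i 0| ^+ 2.

Variable M : mmqfa C Sigma.

Definition Qnon : {set 'I_(nQ M)} := ~: (Qacc M :|: Qrej M).

Definition mmqfa_wf : Prop :=
  (forall s, unitarymx (U M s)) /\ [disjoint Qacc M & Qrej M].

Definition init_vec : 'cV[C]_(nQ M) := \col_i ((i == q0 M)%:R).

(* configuration (psi, p_acc, p_rej) *)
Definition step (st : 'cV[C]_(nQ M) * C * C) (s : option Sigma) :=
  let psi' := U M s *m st.1.1 in
  (projS Qnon psi', st.1.2 + sqnorm (projS (Qacc M) psi'),
   st.2 + sqnorm (projS (Qrej M) psi')).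

Definition run (w : seq (option Sigma)) := foldl step (init_vec, 0, 0) w.

Definition accept_prob (x : seq Sigma) : C :=
  (run (map Some x ++ [:: None])).1.2.

(* accepting states can be observed only when $ is read *)
Definition end_decisive : Prop :=
  forall (x : seq Sigma) (s : Sigma),
    projS (Qacc M) (U M (Some s) *m (run (map Some x)).1.1) = 0.

Definition accepts_bounded_positive_one_sided (L : seq Sigma -> Prop) : Prop :=
  exists c : C, 0 < c /\
    forall x : seq Sigma, (L x -> c < accept_prob x) /\ (~ L x -> accept_prob x = 0).

End MMQFA.

Definition Lz (Sigma : finType) (z : seq Sigma) (x : seq Sigma) : Prop :=
  subseq z x.

(* Main.v *)
Require Import Defs.
From mathcomp Require Import all_boot all_order all_algebra.
From mathcomp Require Import reals.
From mathcomp.real_closed Require Import complex.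
Import Order.TTheory GRing.Theory Num.Theory.
From mathcomp Require Import zify ring lra.
From Stdlib Require Import FunctionalExtensionality.
Local Open Scope ring_scope.
Set Implicit Arguments. Unset Strict Implicit.
Section G.
Variable C : numClosedFieldType.
Variable N : nat.
Definition hh (u : 'cV[C]_N) (c : C) : 'M[C]_N := 1%:M - c *: (u *m u^T).

Lemma hh_adj u c : map_mx Num.conj u = u -> c^* = c -> adjmx (hh u c) = hh u c.
Proof.
move=> Hu Hc; rewrite /adjmx /hh map_mxB map_mx1 map_mxZ map_mxM -map_trmx /= Hu Hc.
by rewrite linearB /= trmx1 linearZ /= trmx_mul trmxK.
Qed.

Lemma hh_unitary u c k : map_mx Num.conj u = u -> c^* = c -> u^T *m u = k%:M ->
  c * k = 2 -> Defs.unitarymx (hh u c).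
Proof.
move=> Hu Hc Hk Hck; rewrite /Defs.unitarymx hh_adj // /hh.
rewrite mulmxBl mul1mx mulmxBr mulmx1 -scalemxAl -scalemxAr mulmxA -(mulmxA u) Hk.
rewrite mul_mx_scalar -scalemxAl scalerA scalerA Hck.
set X := u *m u^T.
have -> : (c * 2) *: X = c *: X + c *: X by rewrite -scalerDl -mulr2n mulr_natr.
by rewrite opprB addrK subrK.
Qed.
End G.

Section Math.
Variable F : numFieldType.
Definition avg (j : nat) (g : nat -> F) : nat -> F :=
  fun i => if (i == j) || (i == j.+1) then (g j.+1 + g j) / 2 else g i.
Definition Mono (g : nat -> F) := (forall i, 0 <= g i) /\ (forall i, g i.+1 <= g i).
Definition zab (k : nat) (g : nat -> F) := forall i, (k < i)%N -> g i = 0.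

Lemma avg_mono j g : Mono g -> Mono (avg j g).
Proof.
case=> H0 H1; have [Ml Mr] := midf_le (H1 j); split.
  by move=> i; rewrite /avg; case: ifP => _ //; exact: le_trans (H0 _) Ml.
move=> i; rewrite /avg eqSS.
have [->|ij] := eqVneq i j; first by rewrite orbT.
have [->|ij1] := eqVneq i j.+1.
  rewrite (_ : (j.+2 == j) = false) /=; last by apply/eqP; lia.
  exact: le_trans (H1 _) Ml.
rewrite /=.
have [Eij|nij] := eqVneq i.+1 j; last by apply: H1.
by rewrite /=; apply: le_trans Mr _; rewrite -Eij; apply: H1.
Qed.

Lemma avg_stay k j g : j != k -> Mono g -> zab k g ->
  zab k (avg j g) /\ g k <= avg j g k.
Proof.
move=> jk [H0 H1] Z; have [Ml Mr] := midf_le (H1 j); split.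
  move=> i ki; rewrite /avg; case: ifP => [/orP [] /eqP Ei|_]; last exact: Z.
    by rewrite (Z j) ?(Z j.+1) ?addr0 ?mul0r //; lia.
  by rewrite (Z j) ?(Z j.+1) ?addr0 ?mul0r //; move/eqP: jk; lia.
rewrite /avg eq_sym (negbTE jk) /=; case: ifP => // /eqP ->; exact: Ml.
Qed.

Lemma fold_mono l g : Mono g -> Mono (foldr avg g l).
Proof. by elim: l => //= j l IH Hg; apply: avg_mono; apply: IH. Qed.

Lemma fold_stay k l g : (forall j, j \in l -> j != k) -> Mono g -> zab k g ->
  zab k (foldr avg g l) /\ g k <= foldr avg g l k.
Proof.
elim: l => [|j l IH] Hl Hm Hz /=; first by split.
have [Z1 B1] := IH (fun j' Hj' => Hl j' (mem_behead (s:=j::l) Hj')) Hm Hz.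
have [Z2 B2] := avg_stay (Hl j (mem_head _ _)) (fold_mono l Hm) Z1.
by split => //; apply: le_trans B1 B2.
Qed.

Lemma fold_noop k l g : (forall j, j \in l -> (k < j)%N) -> zab k g ->
  foldr avg g l = g.
Proof.
elim: l => [|j l IH] Hl Hz //=.
rewrite IH; last by []; last by move=> j' Hj'; apply: Hl; rewrite inE Hj' orbT.
apply: functional_extensionality => i; rewrite /avg.
have Hj := Hl j (mem_head _ _).
case: ifP => // /orP [] /eqP ->; by rewrite !Hz ?addr0 ?mul0r //; lia.
Qed.

End Math.

Section Words.
Variable F : numFieldType.
Variable Sigma : eqType.
Variable z : seq Sigma.
Local Notation n := (size z).

Definition js (s : Sigma) : seq nat := [seq j <- iota 0 n | nth s z j == s].
Definition upd (g : nat -> F) (s : Sigma) := foldr (@avg F) g (js s).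
Definition e0 : nat -> F := fun i => (i == 0)%:R.
Definition phi (x : seq Sigma) := foldl upd e0 x.
Definition Inv k (g : nat -> F) := [/\ Mono g, zab k g & (2^-1)^+k <= g k].

Definition gstep (r : seq Sigma) (y : Sigma) :=
  if r is x :: r' then (if x == y then r' else r) else r.
Fixpoint grem (r : seq Sigma) (w : seq Sigma) :=
  if w is y :: w' then grem (gstep r y) w' else r.

Lemma grem_nil w : grem [::] w = [::].
Proof. by elim: w. Qed.

Lemma subseq_grem r w : subseq r w = (grem r w == [::]).
Proof.
elim: w r => [|y w IH] [|x r] //=; by rewrite ?grem_nil ?IH.
Qed.

Lemma js_split k s : (k < n)%N -> nth s z k == s ->
  js s = [seq j <- iota 0 k | nth s z j == s] ++
         k :: [seq j <- iota k.+1 (n - k.+1) | nth s z j == s].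
Proof.
move=> kn P; rewrite /js.
have -> : iota 0 n = iota 0 k ++ k :: iota k.+1 (n - k.+1).
  rewrite -[in LHS](subnKC (ltnW kn)) iotaD add0n; congr (_ ++ _).
  by rewrite (_ : (n - k = (n - k.+1).+1)%N) /=; last lia.
by rewrite filter_cat /= P.
Qed.

Lemma step_inv k g (s : Sigma) : (k <= n)%N -> Inv k g ->
  let k' := if (k < n)%N && (nth s z k == s) then k.+1 else k in
  [/\ (k' <= n)%N, Inv k' (upd g s) & gstep (drop k z) s = drop k' z].
Proof.
move=> kn [Hm Hz Hb] k'; rewrite /k'.
case: (ltnP k n) => [kn'|nk] /=.
  rewrite (drop_nth s kn') /=.
  case: ifP => P.
    split => //.
    rewrite /upd (js_split kn' P) foldr_cat /=.
    rewrite (@fold_noop F k [seq j <- iota k.+1 (n - k.+1) | nth s z j == s] g) //; last first.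
      by move=> j; rewrite mem_filter mem_iota => /andP [_ /andP []].
    have Hm1 := avg_mono k Hm.
    have Hz1 : zab k.+1 (avg k g).
      move=> i ki; rewrite /avg.
      have h1 : (i == k) = false by apply/eqP; lia.
      have h2 : (i == k.+1) = false by apply/eqP; lia.
      by rewrite h1 h2 /= Hz //; lia.
    have Hl1 : forall j, j \in [seq j <- iota 0 k | nth s z j == s] -> j != k.+1.
      move=> j; rewrite mem_filter mem_iota => /andP [_ /andP [_ Hj]].
      by apply/eqP; lia.
    have [Z2 B2] := fold_stay Hl1 Hm1 Hz1.
    split => //; first exact: fold_mono.
    apply: le_trans B2; rewrite /avg eqxx orbT Hz // add0r exprS mulrC.
    by rewrite ler_wpM2r // invr_ge0 ler0n.
  have Hl : forall j, j \in js s -> j != k.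
    move=> j; rewrite mem_filter mem_iota => /andP [Pj _]; apply/eqP => Ej.
    by rewrite Ej P in Pj.
  have [Z2 B2] := fold_stay Hl Hm Hz.
  by split => //; [split => //; [exact: fold_mono | exact: le_trans B2] | rewrite -drop_nth].
have Ekn : k = n by apply/eqP; rewrite eqn_leq kn nk.
have Hl : forall j, j \in js s -> j != k.
  by move=> j; rewrite mem_filter mem_iota => /andP [_ /andP [_ Hj]]; apply/eqP; lia.
have [Z2 B2] := fold_stay Hl Hm Hz.
split => //; first (split => //; [exact: fold_mono | exact: le_trans B2]).
by rewrite drop_oversize //; lia.
Qed.

Lemma phi_inv x : exists k, [/\ (k <= n)%N, Inv k (phi x) & grem z x = drop k z].
Proof.
rewrite /phi.
suff H : forall w k g, (k <= n)%N -> Inv k g ->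
  exists k', [/\ (k' <= n)%N, Inv k' (foldl upd g w) & grem (drop k z) w = drop k' z].
  have := H x 0%N e0 (leq0n _); rewrite drop0; apply.
  split.
  - split; first by move=> i; rewrite /e0 ler0n.
    by move=> i; rewrite /e0 /= ler0n.
  - by move=> i i0; rewrite /e0; case: i i0.
  - by rewrite expr0 /e0.
elim=> [|y w IH] k g kn Hi /=; first by exists k.
have [k'n Hi' E] := step_inv y kn Hi.
by rewrite E; apply: IH.
Qed.

Lemma phi_L x : subseq z x -> (2^-1)^+n <= phi x n.
Proof.
have [k [kn [_ _ Hb] E]] := phi_inv x.
rewrite subseq_grem E -size_eq0 size_drop subn_eq0 => nk.
by have -> : n = k by apply/eqP; rewrite eqn_leq nk kn.
Qed.

Lemma phi_nL x : ~~ subseq z x -> phi x n = 0.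
Proof.
have [k [kn [_ Hz _] E]] := phi_inv x.
rewrite subseq_grem E -size_eq0 size_drop subn_eq0 -ltnNge => nk.
exact: Hz.
Qed.

Lemma phi_ge0 x i : 0 <= phi x i.
Proof. by have [k [_ [[H _] _ _] _]] := phi_inv x. Qed.

End Words.

Ltac deq := repeat match goal with
  | |- context [@eq_op _ ?a ?b] =>
      let H := fresh in
      first [ have H : (a == b) = true by apply/eqP; lia
            | have H : (a == b) = false by apply/eqP; lia ];
      rewrite H; clear H
  end.

Section Machine.
Variables (C : numClosedFieldType) (Sigma : finType) (z : seq Sigma).
Local Notation n := (size z).
Definition NN := (3 * n).+2.
Definition acc := (3 * n).+1.
Definition vec (f : nat -> C) : 'cV[C]_NN := \col_(i < NN) f i.
Definition d (a i : nat) : C := (i == a)%:R.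
Definition uaf j i := d j i - d j.+1 i - d (n.+1 + j) i + d ((2 * n).+1 + j) i.
Definition usf i := d n i - d acc i.
Definition emb (g : nat -> C) := vec (fun i => if (i <= n)%N then g i else 0).

Lemma sum_d a (f : nat -> C) : (a < NN)%N -> \sum_(i < NN) d a i * f i = f a.
Proof.
move=> Ha; rewrite (bigD1 (Ordinal Ha)) //= /d eqxx mul1r big1 ?addr0 // => i Hi.
rewrite (_ : (i == a :> nat) = false) ?mul0r //; apply/negbTE; move: Hi; apply: contra.
by move=> /eqP E; apply/eqP/val_inj.
Qed.

Lemma sum_uaf j (f : nat -> C) : (j < n)%N ->
  \sum_(k < NN) uaf j k * f k = f j - f j.+1 - f (n.+1 + j) + f ((2 * n).+1 + j).
Proof.
move=> jn; under eq_bigr do rewrite /uaf !(mulrDl, mulNr).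
rewrite !big_split /= !sumrN !sum_d //; rewrite /NN; lia.
Qed.

Lemma sum_usf (f : nat -> C) : \sum_(k < NN) usf k * f k = f n - f acc.
Proof.
under eq_bigr do rewrite /usf !(mulrDl, mulNr).
rewrite !big_split /= !sumrN !sum_d //; rewrite /NN /acc; lia.
Qed.

Lemma hh_vec (u f : nat -> C) c :
  hh (vec u) c *m vec f = vec (fun i => f i - c * (u i * \sum_(k < NN) u k * f k)).
Proof.
rewrite /hh mulmxBl mul1mx -scalemxAl -mulmxA; apply/matrixP => i j.
rewrite (ord1 j) !mxE big_ord1 !mxE; congr (_ - _ * (_ * _)).
by apply: eq_bigr => k _; rewrite !mxE.
Qed.

Lemma vec_conj (u : nat -> C) : (forall i, (u i)^* = u i) -> map_mx Num.conj (vec u) = vec u.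
Proof. by move=> H; apply/matrixP => i j; rewrite !mxE H. Qed.

Lemma vec_tr (u : nat -> C) : (vec u)^T *m vec u = (\sum_(k < NN) u k * u k)%:M.
Proof.
apply/matrixP => i j; rewrite (ord1 i) (ord1 j) !mxE /= mulr1n.
by apply: eq_bigr => k _; rewrite !mxE.
Qed.

Lemma uaf_real j i : (uaf j i)^* = uaf j i.
Proof. by rewrite /uaf /d !(rmorphD, rmorphN) /= !conjC_nat. Qed.
Lemma usf_real i : (usf i)^* = usf i.
Proof. by rewrite /usf /d !(rmorphD, rmorphN) /= !conjC_nat. Qed.

Lemma hh_ua_unitary j : (j < n)%N -> Defs.unitarymx (hh (vec (uaf j)) 2^-1).
Proof.
move=> jn; apply: (@hh_unitary _ _ _ _ 4).
- exact/vec_conj/uaf_real.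
- by rewrite fmorphV /= conjC_nat.
- rewrite vec_tr sum_uaf //; congr (_%:M).
  rewrite /uaf /d; deq => /=; ring.
- by field.
Qed.
End Machine.

Section Machine2.
Variables (C : numClosedFieldType) (Sigma : finType) (z : seq Sigma).
Local Notation n := (size z).
Local Notation NN := (NN z).
Local Notation acc := (acc z).
Local Notation vec := (@vec C Sigma z).
Local Notation emb := (@emb C Sigma z).
Local Notation uaf := (@uaf C Sigma z).
Local Notation usf := (@usf C Sigma z).

Definition Ulist (l : seq nat) := foldr (fun j M => hh (vec (uaf j)) 2^-1 *m M) 1%:M l.
Definition Uall (o : option Sigma) := if o is Some s then Ulist (@js Sigma z s) else hh (vec usf) 1.
Definition Qa : {set 'I_NN} := [set i : 'I_NN | val i == acc].
Definition Qr : {set 'I_NN} := [set i : 'I_NN | (n < i)%N && (i < acc)%N].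
Definition Mq : mmqfa C Sigma := @MMQFA C Sigma NN Uall ord0 Qa Qr.

Lemma avgE j (h : nat -> C) i :
  avg j h i = if (i == j) || (i == j.+1) then (h j.+1 + h j) / 2 else h i.
Proof. by []. Qed.

Lemma Ul_act l g : uniq l -> (forall j, j \in l -> (j < n)%N) ->
  exists Fv : nat -> C, [/\ Ulist l *m emb g = vec Fv,
   (forall i, (i <= n)%N -> Fv i = foldr (@avg C) g l i), Fv acc = 0 &
   (forall j, (j < n)%N -> j \notin l -> Fv (n.+1 + j) = 0 /\ Fv ((2 * n).+1 + j) = 0)].
Proof.
elim: l => [|j l IH] /=.
  move=> _ _; exists (fun i => if (i <= n)%N then g i else 0); split.
  - by rewrite mul1mx.
  - by move=> i ->.
  - by rewrite /acc; case: ifP => //; lia.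
  - by move=> j' _ _; split; case: ifP => //; lia.
move=> /andP [jl ul] Hl.
have jn : (j < n)%N by apply: Hl; rewrite mem_head.
have [Fv [E1 E2 E3 E4]] := IH ul (fun j' Hj' => Hl j' (mem_behead (s:=j::l) Hj')).
have [J1 J2] := E4 j jn jl.
eexists; split.
- by rewrite -mulmxA E1 hh_vec.
- move=> i ni; rewrite sum_uaf // J1 J2 avgE -!E2 //; try lia.
  have [->|ij] := eqVneq i j.
    by rewrite /uaf /d; deq => /=; field.
  have [->|ij1] := eqVneq i j.+1.
    by rewrite /uaf /d; deq => /=; field.
  move/eqP: ij => ij; move/eqP: ij1 => ij1.
  by rewrite /uaf /d /=; deq => /=; ring.
- by rewrite /= E3 /uaf /d /acc; deq => /=; ring.
- move=> j' j'n; rewrite inE negb_or => /andP [/eqP jj' j'l].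
  have [K1 K2] := E4 j' j'n j'l.
  by rewrite /= K1 K2 /uaf /d; split; deq => /=; ring.
Qed.

End Machine2.

Section Machine3.
Variables (C : numClosedFieldType) (Sigma : finType) (z : seq Sigma).
Local Notation n := (size z).
Local Notation NN := (NN z).
Local Notation acc := (acc z).
Local Notation vec := (@vec C Sigma z).
Local Notation emb := (@emb C Sigma z).
Local Notation usf := (@usf C Sigma z).
Local Notation Mq := (@Mq C Sigma z).

Lemma unitary_mul m (A B : 'M[C]_m) : Defs.unitarymx A -> Defs.unitarymx B ->
  Defs.unitarymx (A *m B).
Proof.
rewrite /Defs.unitarymx /adjmx => HA HB.
by rewrite map_mxM trmx_mul mulmxA -(mulmxA A) HB mulmx1 HA.
Qed.

Lemma unitary1 m : Defs.unitarymx (1%:M : 'M[C]_m).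
Proof. by rewrite /Defs.unitarymx /adjmx map_mx1 trmx1 mulmx1. Qed.

Lemma Mq_wf : mmqfa_wf Mq.
Proof.
split.
  case=> [s|] /=.
    have : forall j, j \in js z s -> (j < n)%N.
      by move=> j; rewrite mem_filter mem_iota => /andP [_ /andP []].
    rewrite /Ulist; elim: (js z s) => [|j l IH] Hl /=; first exact: unitary1.
    apply: unitary_mul; first by apply: hh_ua_unitary; apply: Hl; rewrite mem_head.
    by apply: IH => j' Hj'; apply: Hl; rewrite inE Hj' orbT.
  apply: (@hh_unitary _ _ _ _ 2).
  - exact/vec_conj/usf_real.
  - by rewrite conjC1.
  - rewrite vec_tr sum_usf; congr (_%:M).
    rewrite /usf /d /acc; deq => /=; ring.
  - by rewrite mul1r.
apply/pred0P => i /=; rewrite !inE; apply/negbTE; apply/negP => /andP [/eqP -> /andP [_]].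
by rewrite ltnn.
Qed.

Lemma inQnon (i : 'I_NN) : (i \in Qnon Mq) = (val i <= n)%N.
Proof.
rewrite !inE /=; have := ltn_ord i; rewrite /NN /acc; move: (val i) => m Hm.
case: (leqP m n) => H.
  by rewrite (_ : (m == (3 * n).+1) = false) ?(_ : (n < m)%N = false) //; apply/eqP ||
   apply/negbTE; lia.
case: (ltngtP m (3 * n).+1) => //; lia.
Qed.

End Machine3.

Section Machine4.
Variables (C : numClosedFieldType) (Sigma : finType) (z : seq Sigma).
Local Notation n := (size z).
Local Notation NN := (NN z).
Local Notation acc := (acc z).
Local Notation vec := (@vec C Sigma z).
Local Notation emb := (@emb C Sigma z).
Local Notation usf := (@usf C Sigma z).
Local Notation Mq := (@Mq C Sigma z).
Local Notation phi := (@phi C Sigma z).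

Lemma js_props s : uniq (js z s) /\ (forall j, j \in js z s -> (j < n)%N).
Proof.
split; first by rewrite filter_uniq // iota_uniq.
by move=> j; rewrite mem_filter mem_iota => /andP [_ /andP []].
Qed.

Lemma projQa0 (Fv : nat -> C) : Fv acc = 0 -> projS (Qacc Mq) (vec Fv) = 0.
Proof.
move=> H; apply/matrixP => i k; rewrite !mxE inE /=.
by case: eqP => // ->.
Qed.

Lemma sqnorm0 : sqnorm (0 : 'cV[C]_NN) = 0.
Proof. by rewrite /sqnorm big1 // => i _; rewrite mxE normr0 expr0n. Qed.

Lemma run_inv x : (run Mq (map Some x)).1 = (emb (phi x), 0).
Proof.
elim/last_ind: x => [|x s IH].
  rewrite /run /=; congr (_, _); apply/matrixP => i k; rewrite !mxE.
  rewrite /e0; case: ifP => H.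
    by congr (_%:R); apply/idP/idP => /eqP E; apply/eqP => //; apply: val_inj.
  by rewrite (_ : (i == ord0) = false) //; apply/negbTE/eqP => E; rewrite E in H.
rewrite /run map_rcons foldl_rcons -/(run Mq _).
move: IH; case: (run Mq (map Some x)) => [[psi pa] pr] /= [-> ->].
have [U1 U2] := js_props s.
have [Fv [E1 E2 E3 E4]] := Ul_act (phi x) U1 U2.
rewrite E1 projQa0 // sqnorm0 addr0; congr (_, _).
apply/matrixP => i k; rewrite !mxE inQnon.
case: ifP => // H; rewrite E2 //.
by rewrite /phi foldl_rcons.
Qed.

Lemma accept_eq x : accept_prob Mq x = `|phi x n| ^+ 2.
Proof.
rewrite /accept_prob /run foldl_cat -/(run Mq _) /=.
move: (run_inv x); case: (run Mq (map Some x)) => [[psi pa] pr] /= [-> ->].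
rewrite add0r hh_vec (@sum_usf C Sigma z (fun k => if (k <= n)%N then phi x k else 0)) /=.
have Han : (acc < NN)%N by rewrite /acc /NN.
rewrite /sqnorm (bigD1 (Ordinal Han)) //= big1 ?addr0.
  rewrite !mxE inE eqxx /=.
  rewrite /usf /d /acc; deq => /=.
  rewrite leqnn (_ : (3 * n < n)%N = false); last by apply/negbTE; rewrite -leqNgt; lia.
  by congr (`|_| ^+ 2); ring.
move=> i Hi; rewrite !mxE inE.
rewrite (_ : (val i == acc) = false) ?normr0 ?expr0n //.
by apply/negbTE; move: Hi; apply: contra => /eqP E; apply/eqP/val_inj.
Qed.

Lemma Mq_ed : end_decisive Mq.
Proof.
move=> x s; move: (run_inv x); case: (run Mq (map Some x)) => [[psi pa] pr] /= [-> _].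
have [U1 U2] := js_props s.
have [Fv [E1 E2 E3 E4]] := Ul_act (phi x) U1 U2.
by rewrite /= E1 projQa0.
Qed.

End Machine4.

Theorem theorem4p7 (R : realType) (Sigma : finType) (z : seq Sigma) :
  exists M : mmqfa R[i] Sigma,
    mmqfa_wf M /\ end_decisive M /\ accepts_bounded_positive_one_sided M (Lz z).
Proof.
exists (@Mq R[i] Sigma z); split; first exact: Mq_wf.
split; first exact: Mq_ed.
set t : R[i] := (2^-1) ^+ size z.
have tpos : 0 < t by rewrite /t exprn_gt0 // invr_gt0 ltr0n.
have t2pos : 0 < t ^+ 2 by rewrite exprn_gt0.
have [c0 c1] := midf_lt t2pos.
exists ((0 + t ^+ 2) / 2); split => // x; split.
  move=> Hx; rewrite accept_eq.
  have H := @phi_L R[i] Sigma z x Hx.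
  have H0 : 0 <= @phi R[i] Sigma z x (size z) by apply: le_trans (ltW tpos) H.
  rewrite ger0_norm //; apply: lt_le_trans c1 _.
  by rewrite !expr2; apply: ler_pM => //; apply: ltW.
move=> Hx; rewrite accept_eq (@phi_nL R[i] Sigma z x) ?normr0 ?expr0n //.
by apply/negP.
Qed.
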